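(* For every integer $k\ge 2$, $$\bigl|\zeta(k)-1-h(k)\bigr|=C(k)\le\frac13\left(1+\frac{2}{3k-1}\right)\frac{2^{-3k}}{1-2^{-2k}},$$ where $h(k)=\sum_{n=2}^{\infty}\operatorname{arctanh}(n^{-k})$ and $C(k)=\sum_{n=1}^{\infty}\frac{\zeta(k(2n+1))-1}{2n+1}$. In particular $C(k)=O(2^{-3k})$ as $k\to\infty$.
   Context: $\zeta$ denotes the Riemann zeta function. *)

(* Defs.v *)
From Stdlib Require Import Reals.
From Coquelicot Require Import Coquelicot.
Open Scope R_scope.

Definition zeta (s : nat) : R := Series (fun n : nat => / (INR (n + 1)) ^ s).

Definition arctanh (x : R) : R := ln ((1 + x) / (1 - x)) / 2.

(* h(k) = sum_{n>=2} arctanh(n^{-k})  (index shifted: n = m+2) *)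
Definition h_term (k : nat) (m : nat) : R := arctanh (/ (INR (m + 2)) ^ k).
Definition h (k : nat) : R := Series (h_term k).

(* C(k) = sum_{n>=1} (zeta(k(2n+1)) - 1)/(2n+1)  (index shifted: n = m+1) *)
Definition C_term (k : nat) (m : nat) : R :=
  (zeta (k * (2 * m + 3)) - 1) / INR (2 * m + 3).
Definition Cconst (k : nat) : R := Series (C_term k).

(* Main.v *)
Require Import Defs.
From Stdlib Require Import Reals Lra Lia.
From Coquelicot Require Import Coquelicot.
Open Scope R_scope.


Lemma sum_n_nonneg (a : nat -> R) N : (forall n, 0 <= a n) -> 0 <= sum_n a N.
Proof.
  intros H; induction N. rewrite sum_O; auto.
  rewrite sum_Sn; unfold plus; simpl; specialize (H (S N)); lra.
Qed.

Lemma sum_n_incr (a : nat -> R) : (forall n, 0 <= a n) -> forall N, sum_n a N <= sum_n a (S N).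
Proof. intros H N; rewrite sum_Sn; unfold plus; simpl; specialize (H (S N)); lra. Qed.

Lemma nonneg_bounded (a : nat -> R) M : (forall n, 0 <= a n) -> (forall N, sum_n a N <= M) ->
  ex_series a /\ Series a <= M.
Proof.
  intros H HM.
  destruct (ex_finite_lim_seq_incr (sum_n a) M (sum_n_incr a H) HM) as [l Hl].
  assert (Hs : is_series a l) by exact Hl.
  split. exists l; exact Hs.
  rewrite (is_series_unique a l Hs).
  apply (is_lim_seq_le (sum_n a) (fun _ => M) l M); auto. apply is_lim_seq_const.
Qed.

Lemma partial_le_series (a : nat -> R) l N : (forall n, 0 <= a n) -> is_series a l -> sum_n a N <= l.
Proof.
  intros H Hs. apply (is_lim_seq_incr_compare (sum_n a) l); [exact Hs | apply sum_n_incr; auto].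
Qed.

Lemma term_le_series (a : nat -> R) l N : (forall n, 0 <= a n) -> is_series a l -> a N <= l.
Proof.
  intros H Hs. eapply Rle_trans; [| apply (partial_le_series a l N H Hs)].
  destruct N. rewrite sum_O; lra. rewrite sum_Sn; unfold plus; simpl.
  pose proof (sum_n_nonneg a N H); lra.
Qed.


Lemma sum_series (f : nat -> nat -> R) M : (forall m, ex_series (f m)) ->
  ex_series (fun j => sum_n (fun m => f m j) M) /\
  Series (fun j => sum_n (fun m => f m j) M) = sum_n (fun m => Series (f m)) M.
Proof.
  intros H; induction M.
  - split.
    + eapply ex_series_ext; [| apply (H 0%nat)]. intros; rewrite sum_O; auto.
    + rewrite sum_O. apply Series_ext; intros; rewrite sum_O; auto.
  - destruct IHM as [E1 E2]. split.
    + eapply ex_series_ext. intros n; symmetry; rewrite sum_Sn; reflexivity.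
      apply (ex_series_plus (fun n => sum_n (fun m => f m n) M) (f (S M))); auto.
    + rewrite sum_Sn. unfold plus; simpl.
      rewrite <- E2, <- Series_plus; auto.
      apply Series_ext; intros; rewrite sum_Sn; reflexivity.
Qed.

Lemma interchange (b : nat -> nat -> R) (r : nat -> R) :
  (forall m j, 0 <= b m j) -> (forall m, is_series (b m) (r m)) -> ex_series r ->
  ex_series (fun j => Series (fun m => b m j)) /\
  Series (fun j => Series (fun m => b m j)) = Series r.
Proof.
  intros Hb Hr Er.
  assert (Hr0 : forall m, 0 <= r m).
  { intros m. eapply Rle_trans; [apply (Hb m 0%nat)|]. apply (term_le_series (b m)); auto. }
  assert (Ec : forall j, ex_series (fun m => b m j)).
  { intros j. apply (@ex_series_le R_AbsRing R_CompleteNormedModule _ r); auto. intros m. unfold norm; simpl; unfold abs; simpl. rewrite Rabs_pos_eq; auto.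
    apply (term_le_series (b m)); auto. }
  assert (Ebm : forall m, ex_series (b m)) by (intros m; exists (r m); auto).
  assert (Hc0 : forall j, 0 <= Series (fun m => b m j)).
  { intros j. eapply Rle_trans; [apply (Hb 0%nat j)|]. apply (term_le_series (fun m => b m j)); auto. apply Series_correct; auto. }
  assert (Hsr : forall M, sum_n r M = sum_n (fun m => Series (b m)) M).
  { intros M; apply sum_n_ext; intros m; rewrite (is_series_unique _ _ (Hr m)); auto. }
  destruct (nonneg_bounded (fun j => Series (fun m => b m j)) (Series r)) as [E1 L1]; auto.
  { intros J.
    destruct (sum_series (fun j m => b m j) J Ec) as [_ E]. rewrite <- E.
    apply Series_le; auto. intros m; split.
    apply sum_n_nonneg; auto.
    apply (partial_le_series (b m) (r m) J (Hb m) (Hr m)). }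
  split; auto.
  apply Rle_antisym; auto.
  destruct (nonneg_bounded r (Series (fun j => Series (fun m => b m j)))) as [_ L2]; auto.
  intros M. rewrite Hsr.
  destruct (sum_series b M Ebm) as [_ E]. rewrite <- E.
  apply Series_le; auto. intros j; split. apply sum_n_nonneg; auto.
  apply (partial_le_series (fun m => b m j)); auto.
  apply Series_correct; auto.
Qed.



Lemma powR (z : R) k : @pow_n R_AbsRing z k = z ^ k.
Proof. induction k; simpl; auto. Qed.

Lemma is_series_zero : is_series (fun _ : nat => 0) 0.
Proof.
  assert (H : forall n, sum_n (fun _ : nat => 0) n = 0).
  { induction n. rewrite sum_O; auto. rewrite sum_Sn, IHn. unfold plus; simpl. ring. }
  assert (L : is_lim_seq (sum_n (fun _ : nat => 0)) 0).
  { apply (is_lim_seq_ext (fun _ => 0)). intros n; rewrite H; auto. apply is_lim_seq_const. }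
  exact L.
Qed.

Definition ath (n : nat) : R := if Nat.even n then 0 else / INR n.

Lemma ath_bound n : Rabs (ath n) <= 1.
Proof.
  unfold ath. destruct (Nat.even n) eqn:E. rewrite Rabs_R0; lra.
  destruct n. discriminate.
  rewrite Rabs_pos_eq. 
  rewrite <- Rinv_1. apply Rinv_le_contravar; [lra|]. rewrite S_INR; pose proof (pos_INR n); lra.
  left; apply Rinv_0_lt_compat; apply lt_0_INR; lia.
Qed.

Lemma ath_disk : CV_disk ath (/2).
Proof.
  unfold CV_disk.
  apply (@ex_series_le R_AbsRing R_CompleteNormedModule _ (fun n => (/2)^n)).
  - intros n. unfold norm; simpl; unfold abs; simpl. rewrite Rabs_Rabsolu, Rabs_mult.
    rewrite (Rabs_pos_eq ((/2)^n)) by (apply pow_le; lra).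
    pose proof (ath_bound n). pose proof (pow_le (/2) n ltac:(lra)).
    pose proof (Rabs_pos (ath n)). nra.
  - exists (/ (1 - /2)). apply is_series_geom. rewrite Rabs_pos_eq; lra.
Qed.

Lemma ath_radius : Rbar_le (/2) (CV_radius ath).
Proof.
  unfold CV_radius. destruct (Lub_Rbar_correct (CV_disk ath)) as [H _].
  apply H. apply ath_disk.
Qed.

Lemma ath_derive x : Rabs x < /2 -> is_derive (PSeries ath) x (PSeries (PS_derive ath) x).
Proof.
  intros Hx. apply is_derive_PSeries.
  eapply Rbar_lt_le_trans; [| apply ath_radius]. simpl; auto.
Qed.

Lemma geom_pseries y : Rabs y < 1 -> PSeries (fun _ => 1) y = / (1 - y).
Proof.
  intros Hy. apply (is_pseries_unique (fun _ => 1) y). unfold is_pseries.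
  eapply is_series_ext; [| apply (is_series_geom y Hy)].
  intros n. unfold scal; simpl; unfold mult; simpl. rewrite <- (powR y n). symmetry; apply Rmult_1_r.
Qed.

Lemma ath_dseries x : Rabs x < /2 -> PSeries (PS_derive ath) x = / (1 - x^2).
Proof.
  intros Hx.
  assert (E1 : forall n, PS_derive ath (2*n) = 1).
  { intros n. unfold PS_derive, ath.
    replace (Nat.even (S (2*n))) with false.
    2:{ replace (S (2*n)) with (2*n+1)%nat by lia. rewrite Nat.even_odd. auto. }
    field. apply not_0_INR; lia. }
  assert (E2 : forall n, PS_derive ath (2*n+1) = 0).
  { intros n. unfold PS_derive, ath.
    replace (Nat.even (S (2*n+1))) with true.
    2:{ replace (S (2*n+1)) with (2*(n+1))%nat by lia. rewrite Nat.even_mul. auto. }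
    ring. }
  assert (Hy : Rabs (x^2) < 1).
  { rewrite Rabs_pos_eq by (apply pow2_ge_0). rewrite <- Rsqr_pow2.
    pose proof (Rabs_pos x). rewrite Rsqr_abs; unfold Rsqr; nra. }
  rewrite PSeries_odd_even.
  - rewrite (PSeries_ext _ _ _ E1), (PSeries_ext _ _ _ E2), PSeries_const_0, geom_pseries; auto. ring.
  - eapply ex_pseries_ext. intros n; symmetry; apply E1.
    exists (/(1-x^2)). pose proof (geom_pseries _ Hy). 
    unfold is_pseries. eapply is_series_ext; [| apply (is_series_geom (x^2) Hy)].
    intros n. unfold scal; simpl; unfold mult; simpl. rewrite <- (powR (x*(x*1)) n). symmetry; apply Rmult_1_r.
  - eapply ex_pseries_ext. intros n; symmetry; apply E2.
    exists 0. unfold is_pseries. eapply is_series_ext; [| apply is_series_zero].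
    intros n; simpl. unfold scal; simpl; unfold mult; simpl. ring.
Qed.

Lemma arctanh_derive x : -1 < x < 1 -> is_derive arctanh x (/ (1 - x^2)).
Proof.
  intros Hx. unfold arctanh. auto_derive.
  - repeat split; try lra. apply Rdiv_lt_0_compat; lra.
  - field. split; [|lra]. nra.
Qed.

Lemma g_derive t : Rabs t < /2 -> is_derive (fun t => arctanh t - PSeries ath t) t 0.
Proof.
  intros Ht.
  assert (Ht' : -1 < t < 1) by (apply Rabs_def2 in Ht; lra).
  pose proof (is_derive_minus arctanh (PSeries ath) t _ _ (arctanh_derive t Ht') (ath_derive t Ht)) as D.
  rewrite ath_dseries in D by auto.
  unfold minus, plus, opp in D; simpl in D.
  replace 0 with (/ (1 - t ^ 2) + - / (1 - t ^ 2)) by ring. exact D.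
Qed.

Lemma arctanh_pseries x : 0 <= x < /2 -> PSeries ath x = arctanh x.
Proof.
  intros Hx.
  destruct (MVT_gen (fun t => arctanh t - PSeries ath t) 0 x (fun _ => 0)) as [c [_ Hc]].
  - intros t Ht. apply g_derive. rewrite Rmin_left, Rmax_right in Ht by lra.
    rewrite Rabs_pos_eq; lra.
  - intros t Ht. rewrite Rmin_left, Rmax_right in Ht by lra.
    assert (E : ex_derive (fun t => arctanh t - PSeries ath t) t).
    { exists 0. apply g_derive. rewrite Rabs_pos_eq; lra. }
    apply continuity_pt_filterlim. exact (ex_derive_continuous _ _ E).
  - rewrite PSeries_0 in Hc. unfold ath in Hc; simpl in Hc.
    unfold arctanh in Hc. replace ((1+0)/(1-0)) with 1 in Hc by field. rewrite ln_1 in Hc. unfold arctanh, ath. lra.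
Qed.

Lemma arctanh_series x : 0 <= x < /2 ->
  is_series (fun j => x ^ (2*j+1) / INR (2*j+1)) (arctanh x).
Proof.
  intros Hx.
  assert (Hy : Rabs (x^2) < /2).
  { rewrite Rabs_pos_eq by (apply pow2_ge_0). nra. }
  assert (Ey : ex_pseries (fun n => ath (2*n+1)) (x^2)).
  { apply CV_disk_correct. unfold CV_disk.
    apply (@ex_series_le R_AbsRing R_CompleteNormedModule _ (fun n => (/2)^n)).
    - intros n. unfold norm; simpl; unfold abs; simpl. rewrite Rabs_Rabsolu, Rabs_mult, <- RPow_abs.
      pose proof (ath_bound (2*n+1)). pose proof (pow_le (Rabs (x^2)) n (Rabs_pos _)).
      pose proof (pow_incr (Rabs (x^2)) (/2) n (conj (Rabs_pos _) (Rlt_le _ _ Hy))).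
      pose proof (Rabs_pos (ath (2*n+1))). replace (n + (n+0) +1)%nat with (2*n+1)%nat by lia; replace (x*(x*1)) with (x^2) by ring; nra.
    - exists (/ (1 - /2)). apply is_series_geom. rewrite Rabs_pos_eq; lra. }
  assert (E0 : ex_pseries (fun n => ath (2*n)) (x^2)).
  { exists 0. eapply is_series_ext; [| apply is_series_zero].
    intros n. unfold ath. rewrite Nat.even_mul. simpl. unfold scal; simpl; unfold mult; simpl. ring. }
  pose proof (PSeries_odd_even ath x E0 Ey) as P.
  rewrite arctanh_pseries in P by auto.
  rewrite (PSeries_ext (fun n => ath (2*n)) (fun _ => 0)), PSeries_const_0 in P.
  2:{ intros n. unfold ath. rewrite Nat.even_mul. auto. }
  rewrite P, Rplus_0_l.
  pose proof (PSeries_correct _ _ Ey) as C.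
  pose proof (@is_series_scal_l R_AbsRing R_NormedModule x _ _ C) as D.
  eapply is_series_ext; [| exact D].
  intros n. unfold scal; simpl; unfold mult; simpl. rewrite powR.
  replace (n + (n+0) + 1)%nat with (S (2*n)) by lia. replace (x*(x*1)) with (x^2) by ring.
  unfold ath. replace (Nat.even (S (2*n))) with false by (replace (S (2*n)) with (2*n+1)%nat by lia; rewrite Nat.even_odd; auto).
  rewrite <- pow_mult. replace (2*n)%nat with (n*2)%nat by lia. rewrite <- tech_pow_Rmult.
  assert (INR (S (n*2)) <> 0) by (apply not_0_INR; lia). field; auto.
Qed.


Lemma bern a m : 0 <= a -> a^(S m) + INR (S m) * a^m <= (a+1)^(S m).
Proof.
  intros Ha. induction m.
  - simpl. lra.
  - pose proof (pow_le a m Ha). 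
    replace ((a+1)^(S (S m))) with ((a+1)*(a+1)^(S m)) by (simpl; ring).
    replace (a^(S (S m))) with (a*a^(S m)) by (simpl; ring).
    replace (a^(S m)) with (a*a^m) in * by (simpl; ring).
    rewrite !S_INR in *. pose proof (pos_INR m). nra.
Qed.

Lemma tele_step a m : 1 <= a -> (1 <= m)%nat ->
  / (a+1)^(S m) <= / (INR m * a^m) - / (INR m * (a+1)^m).
Proof.
  intros Ha Hm. destruct m as [|p]; [lia|].
  set (M := INR (S p)). set (A := a^(S p)). set (B := (a+1)^(S p)).
  assert (HM : 0 < M) by (unfold M; apply lt_0_INR; lia).
  assert (HA : 0 < A) by (unfold A; apply pow_lt; lra).
  assert (HB : 0 < B) by (unfold B; apply pow_lt; lra).
  assert (Key : M * A <= (a+1) * (B - A)).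
  { pose proof (bern a p ltac:(lra)). fold M A B in H.
    pose proof (pow_le a p ltac:(lra)).
    replace A with (a * a^p) in * by (unfold A; simpl; ring). nra. }
  replace ((a+1)^(S (S p))) with ((a+1)*B) by (unfold B; simpl; ring).
  assert (E : / (M * A) - / (M * B) - / ((a + 1) * B) = ((a+1)*(B-A) - M*A) / (M*A*B*(a+1)))
    by (field; repeat split; lra).
  assert (0 <= ((a+1)*(B-A) - M*A) / (M*A*B*(a+1))).
  { apply Rdiv_le_0_compat. lra. apply Rmult_lt_0_compat; [|lra]. apply Rmult_lt_0_compat; [|lra]. apply Rmult_lt_0_compat; lra. }
  lra.
Qed.

Definition ztail (s : nat) (m : nat) : R := / INR (m + 2) ^ s.

Lemma ztail_pos s m : 0 < ztail s m.
Proof. unfold ztail. apply Rinv_0_lt_compat, pow_lt, lt_0_INR; lia. Qed.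

Lemma ztail_bound s : (2 <= s)%nat ->
  ex_series (ztail s) /\ Series (ztail s) <= (/2)^s * (1 + 2 / (INR s - 1)).
Proof.
  intros Hs. destruct s as [|m]; [lia|].
  set (T := fun N : nat => / (INR m * INR (N+2) ^ m)).
  assert (HT : forall N, 0 <= T N).
  { intros N; unfold T. left; apply Rinv_0_lt_compat, Rmult_lt_0_compat.
    apply lt_0_INR; lia. apply pow_lt, lt_0_INR; lia. }
  assert (Hp : forall N, sum_n (ztail (S m)) N + T N <= (/2)^(S m) + T 0%nat).
  { induction N.
    - rewrite sum_O. unfold ztail. simpl (0+2)%nat. rewrite pow_inv. 
      replace (INR 2) with 2 by (simpl; ring). lra.
    - rewrite sum_Sn. unfold plus; simpl.
      assert (ztail (S m) (S N) <= T N - T (S N)).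
      { unfold ztail, T. replace (INR (S N + 2)) with (INR (N+2) + 1)
          by (rewrite !plus_INR, (S_INR N); ring).
        apply tele_step. replace (INR (N+2)) with (INR N + 2) by (rewrite plus_INR; simpl; ring).
        pose proof (pos_INR N); lra. lia. }
      change ((/2)^(S m)) with (/2 * (/2)^m) in IHN. lra. }
  apply nonneg_bounded.
  - intros n; left; apply ztail_pos.
  - intros N. specialize (Hp N). specialize (HT N).
    assert (E : (/2)^(S m) + T 0%nat = (/2)^(S m) * (1 + 2 / (INR (S m) - 1))).
    { unfold T. rewrite S_INR. simpl (0+2)%nat. replace (INR 2) with 2 by (simpl; ring).
      assert (INR m <> 0) by (apply not_0_INR; lia).
      rewrite <- Rinv_pow by lra. simpl. field. repeat split; try (apply pow_nonzero; lra); try (replace (INR m + 1 - 1) with (INR m) by ring); auto. }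
    lra.
Qed.

Lemma zeta_split s : (2 <= s)%nat ->
  is_series (fun n => / INR (n+1) ^ s) (Series (ztail s) + 1).
Proof.
  intros Hs. destruct (ztail_bound s Hs) as [E _].
  apply is_series_decr_1.
  match goal with |- is_series _ ?l => replace l with (Series (ztail s)) end.
  2:{ unfold plus, opp; simpl. rewrite pow1, Rinv_1. ring. }
  eapply is_series_ext; [| apply (Series_correct _ E)].
  intros n; unfold ztail. f_equal. f_equal. f_equal. lia.
Qed.


Lemma pow_le_small x m n : 0 <= x <= 1 -> (m <= n)%nat -> x^n <= x^m.
Proof.
  intros Hx Hmn. replace n with (m + (n-m))%nat by lia. rewrite pow_add.
  pose proof (pow_le x m (proj1 Hx)).
  pose proof (pow_incr x 1 (n-m) Hx). rewrite pow1 in H0. nra.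
Qed.

Lemma x_bounds k m : (2 <= k)%nat -> 0 < ztail k m <= /4.
Proof.
  intros Hk. split. apply ztail_pos. unfold ztail.
  apply Rinv_le_contravar; [lra|].
  assert (H2 : 2 <= INR (m+2)) by (rewrite plus_INR; simpl; pose proof (pos_INR m); lra).
  pose proof (pow_incr 2 (INR (m+2)) k ltac:(lra)).
  pose proof (Rle_pow 2 2 k ltac:(lra) Hk). simpl in H0. lra.
Qed.

Definition bb (k m j : nat) : R := ztail k m ^ (2*j+3) / INR (2*j+3).

Lemma bb_pos k m j : (2 <= k)%nat -> 0 <= bb k m j.
Proof.
  intros Hk. unfold bb. apply Rdiv_le_0_compat. apply pow_le. left; apply ztail_pos.
  apply lt_0_INR; lia.
Qed.

Lemma row_series k m : (2 <= k)%nat -> is_series (bb k m) (h_term k m - ztail k m).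
Proof.
  intros Hk. destruct (x_bounds k m Hk) as [H1 H2].
  pose proof (arctanh_series (ztail k m) ltac:(lra)) as Hs.
  replace (arctanh (ztail k m)) with
    (plus (h_term k m - ztail k m) (ztail k m ^ (2 * 0 + 1) / INR (2 * 0 + 1))) in Hs.
  2:{ unfold plus; simpl. unfold h_term, ztail. field. apply pow_nonzero, not_0_INR; lia. }
  pose proof (@is_series_incr_1 R_AbsRing R_NormedModule (fun j => ztail k m ^ (2*j+1) / INR (2*j+1)) _ Hs) as Hs2. clear Hs. rename Hs2 into Hs.
  eapply is_series_ext; [| exact Hs]. intros j; unfold bb.
  replace (2 * Datatypes.S j + 1)%nat with (2*j+3)%nat by lia. reflexivity.
Qed.

Lemma bb_le k m j : (2 <= k)%nat -> bb k m j <= ztail k m * (/2)^j.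
Proof.
  intros Hk. destruct (x_bounds k m Hk) as [H1 H2]. unfold bb.
  assert (HI : 1 <= INR (2*j+3)) by (apply (le_INR 1); lia).
  assert (Hp : 0 <= ztail k m ^ (2*j+3)) by (apply pow_le; lra).
  assert (A1 : ztail k m ^ (2*j+3) / INR (2*j+3) <= ztail k m ^ (2*j+3)).
  { unfold Rdiv. rewrite <- (Rmult_1_r (ztail k m ^ (2*j+3))) at 2.
    apply Rmult_le_compat_l; auto. rewrite <- Rinv_1. apply Rinv_le_contravar; lra. }
  replace (2*j+3)%nat with (S (2*j+2)) in A1 by lia. rewrite <- tech_pow_Rmult in A1.
  pose proof (pow_incr (ztail k m) (/2) (2*j+2) ltac:(lra)).
  pose proof (pow_le_small (/2) j (2*j+2) ltac:(lra) ltac:(lia)).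
  pose proof (pow_le (ztail k m) (2*j+2) ltac:(lra)).
  replace (2*j+3)%nat with (S (2*j+2)) by lia. 
  assert (ztail k m ^ (2*j+2) <= (/2)^j) by lra.
  rewrite <- tech_pow_Rmult.
  eapply Rle_trans; [exact A1|]. apply Rmult_le_compat_l; lra.
Qed.

Lemma row_bound k m : (2 <= k)%nat -> 0 <= h_term k m - ztail k m <= 2 * ztail k m.
Proof.
  intros Hk. pose proof (row_series k m Hk) as Hr.
  split.
  - eapply Rle_trans; [apply (bb_pos k m 0 Hk)|]. apply (term_le_series (bb k m)); auto.
    intros; apply bb_pos; auto.
  - rewrite <- (is_series_unique _ _ Hr).
    assert (G : is_series (fun j => ztail k m * (/2)^j) (ztail k m * 2)).
    { assert (G0 : is_series (fun j => (/2)^j) (/ (1 - /2))) by (apply is_series_geom; rewrite Rabs_pos_eq; lra).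
      replace (/ (1 - /2)) with 2 in G0 by field.
      apply (@is_series_scal_l R_AbsRing R_NormedModule (ztail k m) (fun j => (/2)^j)). exact G0. }
    replace (2 * ztail k m) with (ztail k m * 2) by ring.
    rewrite <- (is_series_unique _ _ G).
    apply Series_le. intros j; split. apply bb_pos; auto. apply bb_le; auto.
    exists (ztail k m * 2); auto.
Qed.

Lemma col_series k j : (2 <= k)%nat -> Series (fun m => bb k m j) = C_term k j.
Proof.
  intros Hk. unfold C_term, bb.
  assert (Hs : (2 <= k * (2*j+3))%nat) by nia.
  pose proof (is_series_unique _ _ (zeta_split _ Hs)) as Z. unfold zeta. rewrite Z.
  unfold Rdiv. rewrite Series_scal_r.
  replace (2*j+3)%nat with (2*j+3)%nat by lia.
  f_equal.
  replace (Series (ztail (k * (2 * j + 3))) + 1 - 1) with (Series (ztail (k * (2 * j + 3)))) by ring.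
  apply Series_ext. intros m. unfold ztail. rewrite pow_mult.
  rewrite pow_inv. reflexivity.
Qed.

Lemma Cterm_eq k j : (2 <= k)%nat -> C_term k j = Series (ztail (k * (2*j+3))) / INR (2*j+3).
Proof.
  intros Hk. unfold C_term.
  assert (Hs : (2 <= k * (2*j+3))%nat) by nia.
  pose proof (is_series_unique _ _ (zeta_split _ Hs)) as Z. unfold zeta. rewrite Z.
  f_equal. ring.
Qed.

Lemma Cterm_bound k j : (2 <= k)%nat ->
  0 <= C_term k j <=
  (/3 * (1 + 2 / (3 * INR k - 1)) * (/2)^(3*k)) * ((/2)^(2*k))^j.
Proof.
  intros Hk. rewrite Cterm_eq by auto.
  assert (Hs : (2 <= k * (2*j+3))%nat) by nia.
  destruct (ztail_bound _ Hs) as [E L].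
  assert (HS0 : 0 <= Series (ztail (k * (2*j+3)))).
  { eapply Rle_trans; [left; apply (ztail_pos (k*(2*j+3)) 0)|].
    apply (term_le_series (ztail (k*(2*j+3)))). intros; left; apply ztail_pos.
    apply Series_correct; auto. }
  assert (HK : 2 <= INR k) by (apply (le_INR 2); lia).
  assert (HU : 3 <= INR (2*j+3)) by (replace 3 with (INR 3) by (simpl; ring); apply le_INR; lia).
  split. apply Rdiv_le_0_compat; lra.
  rewrite mult_INR in L.
  set (K := INR k) in *. set (U := INR (2*j+3)) in *.
  assert (P : (/2)^(k*(2*j+3)) = (/2)^(3*k) * ((/2)^(2*k))^j).
  { rewrite <- pow_mult, <- pow_add. f_equal. lia. }
  rewrite P in L.
  set (Q := (/2)^(3*k) * ((/2)^(2*k))^j) in *.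
  assert (HQ : 0 <= Q) by (unfold Q; apply Rmult_le_pos; apply pow_le; try apply pow_le; lra).
  assert (F : (1 + 2 / (K * U - 1)) * / U <= /3 * (1 + 2 / (3 * K - 1))).
  { rewrite Rmult_comm. apply Rmult_le_compat.
    - left; apply Rinv_0_lt_compat; lra.
    - assert (0 < 2 / (K*U-1)) by (apply Rdiv_lt_0_compat; nra). lra.
    - apply Rinv_le_contravar; lra.
    - apply Rplus_le_compat_l. unfold Rdiv. apply Rmult_le_compat_l; [lra|].
      apply Rinv_le_contravar; nra. }
  unfold Rdiv at 1.
  apply Rle_trans with (Q * (1 + 2 / (K * U - 1)) * / U).
  - apply Rmult_le_compat_r. left; apply Rinv_0_lt_compat; lra. lra.
  - replace (/ 3 * (1 + 2 / (3 * K - 1)) * (/ 2) ^ (3 * k) * ((/ 2) ^ (2 * k)) ^ j)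
      with (Q * (/ 3 * (1 + 2 / (3 * K - 1)))) by (unfold Q; ring).
    rewrite Rmult_assoc. apply Rmult_le_compat_l; auto.
Qed.

Lemma part1 k : (2 <= k)%nat ->
     ex_series (h_term k) /\ ex_series (C_term k) /\
     Rabs (zeta k - 1 - h k) = Cconst k /\
     Cconst k <= / 3 * (1 + 2 / (3 * INR k - 1)) * ((/ 2) ^ (3 * k) / (1 - (/ 2) ^ (2 * k))).
Proof.
  intros Hk.
  destruct (ztail_bound k Hk) as [Ex _].
  set (r := fun m => h_term k m - ztail k m).
  assert (Er : ex_series r).
  { apply (@ex_series_le R_AbsRing R_CompleteNormedModule _ (fun m => 2 * ztail k m)).
    - intros m. unfold norm; simpl; unfold abs; simpl. destruct (row_bound k m Hk).
      unfold r. rewrite Rabs_pos_eq; lra.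
    - apply (ex_series_scal_l 2 (ztail k)) in Ex. exact Ex. }
  destruct (interchange (bb k) r) as [Ec Sc].
  - intros; apply bb_pos; auto.
  - intros m; apply row_series; auto.
  - auto.
  assert (EC : ex_series (C_term k)).
  { eapply ex_series_ext; [| exact Ec]. intros j; apply col_series; auto. }
  assert (SC : Cconst k = Series r).
  { unfold Cconst. rewrite <- Sc. apply Series_ext. intros j; rewrite col_series; auto. }
  assert (Eh : forall m, h_term k m = r m + ztail k m) by (intros; unfold r; ring).
  assert (EH : ex_series (h_term k)).
  { eapply ex_series_ext. intros m; symmetry; apply Eh. apply (@ex_series_plus R_AbsRing R_NormedModule r (ztail k)); auto. }
  assert (SH : h k = Series r + Series (ztail k)).
  { unfold h. rewrite (Series_ext _ _ Eh). apply Series_plus; auto. }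
  assert (SZ : zeta k = Series (ztail k) + 1) by (apply is_series_unique, zeta_split; auto).
  assert (Rpos : 0 <= Series r).
  { rewrite <- (is_series_unique _ _ is_series_zero). apply Series_le; auto.
    intros m; split; [lra|]. destruct (row_bound k m Hk); unfold r; lra. }
  assert (HK : 2 <= INR k) by (apply (le_INR 2); lia).
  set (c0 := / 3 * (1 + 2 / (3 * INR k - 1)) * (/ 2) ^ (3 * k)).
  set (q := (/2)^(2*k)).
  assert (Hq : 0 < q <= /16).
  { unfold q. split. apply pow_lt; lra.
    pose proof (pow_le_small (/2) 4 (2*k) ltac:(lra) ltac:(lia)). replace ((/2)^4) with (/16) in H by field. lra. }
  assert (G : is_series (fun j => c0 * q^j) (c0 * / (1 - q))).
  { apply (@is_series_scal_l R_AbsRing R_NormedModule c0 (fun j => q^j)).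
    apply is_series_geom. rewrite Rabs_pos_eq; lra. }
  split; auto. split; auto. split.
  - rewrite SZ, SH, SC. replace (Series (ztail k) + 1 - 1 - (Series r + Series (ztail k))) with (- Series r) by ring.
    rewrite Rabs_Ropp, Rabs_pos_eq; auto.
  - unfold Cconst. apply Rle_trans with (Series (fun j => c0 * q^j)).
    + apply Series_le. intros j. apply Cterm_bound; auto. exists (c0 * / (1 - q)); auto.
    + rewrite (is_series_unique _ _ G). unfold c0, Rdiv. fold q. lra.
Qed.

Theorem theorem5p2 :
  (forall k : nat, (2 <= k)%nat ->
     ex_series (h_term k) /\ ex_series (C_term k) /\
     Rabs (zeta k - 1 - h k) = Cconst k /\
     Cconst k <= / 3 * (1 + 2 / (3 * INR k - 1)) * ((/ 2) ^ (3 * k) / (1 - (/ 2) ^ (2 * k))))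
  /\
  (exists M : R, forall k : nat, (2 <= k)%nat -> Rabs (Cconst k) <= M * (/ 2) ^ (3 * k)).
Proof.
  split. exact part1.
  exists 1. intros k Hk. destruct (part1 k Hk) as [_ [_ [HA HB]]].
  assert (C0 : 0 <= Cconst k) by (rewrite <- HA; apply Rabs_pos).
  rewrite Rabs_pos_eq by auto.
  assert (HK : 2 <= INR k) by (apply (le_INR 2); lia).
  set (P := (/2)^(3*k)) in *.
  set (q := (/2)^(2*k)) in *.
  assert (HP : 0 < P) by (unfold P; apply pow_lt; lra).
  assert (Hq : 0 < q <= /16).
  { unfold q. split. apply pow_lt; lra.
    pose proof (pow_le_small (/2) 4 (2*k) ltac:(lra) ltac:(lia)). replace ((/2)^4) with (/16) in H by field. lra. }
  set (a := 2 / (3 * INR k - 1)) in *.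
  assert (Ha : 0 <= a <= 2/5).
  { unfold a. split. apply Rdiv_le_0_compat; lra.
    unfold Rdiv. apply Rmult_le_compat_l; [lra|]. apply Rinv_le_contravar; lra. }
  set (b := / (1 - q)).
  assert (Hb : 0 <= b <= 16/15).
  { unfold b. split. left; apply Rinv_0_lt_compat; lra.
    replace (16/15) with (/ (15/16)) by field. apply Rinv_le_contravar; lra. }
  replace (P / (1 - q)) with (P * b) in HB by (unfold b; field; lra).
  assert ((1+a)*b <= 3) by nra. assert (/3*(1+a)*(P*b) = /3 * ((1+a)*b) * P) by ring. nra.
Qed.
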